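(* Let $G=(N,A)$ be a compressed $s$-$t$ DAG and let $u,v\in N$ be distinct nodes. If $u$ is the immediate $s$-dominator of $v$ and $v$ is the immediate $t$-dominator of $u$, then $u$ is the immediate $s$-dominator of some node different from $v$, and $v$ is the immediate $t$-dominator of some node different from $u$.
   Context: An $s$-$t$ DAG is a directed acyclic graph with a unique source $s$ and a unique sink $t$ such that every node is reachable from $s$ and every node reaches $t$. A unitary path is a path in which every node other than the first has indegree exactly one and every node other than the last has outdegree exactly one. The DAG is compressed if it has no unitary path with two or more nodes (equivalently, no arc $xy$ such that $y$ is the only out-neighbour of $x$ and $x$ is the only in-neighbour of $y$). A node $a$ $s$-dominates $b$ if every $s$-$b$ path contains $a$ (strictly if $a\neq b$); $a$ $t$-dominates $b$ if every $b$-$t$ path contains $a$. For $b\neq s$, the immediate $s$-dominator of $b$ is the strict $s$-dominator of $b$ that is $s$-dominated by all strict $s$-dominators of $b$; immediate $t$-dominators are defined symmetrically. *)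

(* Defs.v *)
From mathcomp Require Import all_boot.
Set Implicit Arguments. Unset Strict Implicit. Unset Printing Implicit Defensive.

Section DAG.
Variables (T : finType) (e : rel T).

(* A walk/path from x to y: node sequence x :: p, consecutive nodes joined by arcs,
   ending in y.  The nodes it contains are those of x :: p. *)
Definition is_walk (x y : T) (p : seq T) : bool := path e x p && (last x p == y).

Definition indeg (y : T) : nat := #|[set x | e x y]|.
Definition outdeg (x : T) : nat := #|[set y | e x y]|.

Definition acyclic : Prop := forall x p, is_walk x x p -> p = [::].

Definition st_dag (s t : T) : Prop :=
  [/\ acyclic,
      (forall x, indeg x = 0 <-> x = s),
      (forall x, outdeg x = 0 <-> x = t),
      (forall x, exists p, is_walk s x p) &
      (forall x, exists p, is_walk x t p)].

Definition compressed : Prop :=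
  forall x y, e x y -> ~ (outdeg x = 1 /\ indeg y = 1).

Definition s_dom (s a b : T) : Prop :=
  forall p, is_walk s b p -> a \in s :: p.

Definition t_dom (t a b : T) : Prop :=
  forall p, is_walk b t p -> a \in b :: p.

Definition imm_s_dom (s a b : T) : Prop :=
  [/\ b <> s, a <> b, s_dom s a b &
      forall c, c <> b -> s_dom s c b -> s_dom s c a].

Definition imm_t_dom (t a b : T) : Prop :=
  [/\ b <> t, a <> b, t_dom t a b &
      forall c, c <> b -> t_dom t c b -> t_dom t c a].

End DAG.

(* Main.v *)
Require Import Defs.
From mathcomp Require Import all_boot.
Set Implicit Arguments. Unset Strict Implicit. Unset Printing Implicit Defensive.

Section Aux.
Variables (T : finType) (e : rel T).

Lemma walk_cat x y z p q : is_walk e x y p -> is_walk e y z q -> is_walk e x z (p ++ q).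
Proof.
move=> /andP[P /eqP E] /andP[Q L]; subst y. by rewrite /is_walk cat_path last_cat P Q L.
Qed.

Lemma walk_split x y z p : is_walk e x y p -> z \in x :: p ->
  exists p1 p2, p = p1 ++ p2 /\ is_walk e x z p1 /\ is_walk e z y p2.
Proof.
move=> /andP[P L] Hz; move: P L; case/splitPl: Hz => p1 p2 Ez.
rewrite cat_path last_cat Ez => /andP[P1 P2] L.
exists p1, p2; split=> //; split; by rewrite /is_walk ?P1 ?P2 ?L ?Ez ?eqxx.
Qed.

Lemma rev_walk x y q : is_walk e y x q ->
  is_walk (fun a b => e b a) x y (rev (belast y q)) /\ (x :: rev (belast y q) =i y :: q).
Proof.
move=> /andP[P /eqP L]; split.
  rewrite /is_walk -L (rev_path (fun a b => e b a)) P /=.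
  case: q {P L} => [|z q] //=; by rewrite rev_cons last_rcons.
move=> z; rewrite -L in_cons mem_rev lastI mem_rcons in_cons orbC.
by [].
Qed.

Lemma side (s t u v : T) :
  st_dag e s t -> compressed e -> u <> v ->
  s_dom e s u v -> t_dom e t v u ->
  exists w, w <> v /\ imm_s_dom e s u w.
Proof.
move=> [acy hin hout hfrom hto] comp nuv sd td.
have noback : forall x r y, e u x -> is_walk e x y r -> u \notin x :: r.
  move=> x r y eux W; apply/negP => Hu.
  have [p1 [p2 [_ [W1 _]]]] := walk_split W Hu.
  have : is_walk e u u (x :: p1) by move: W1; rewrite /is_walk /= eux.
  by move/acy.
have nut : u <> t.
  move=> ut; have := td [::]; rewrite /is_walk /= ut eqxx => /(_ isT).
  by rewrite in_cons in_nil orbF => /eqP vt; apply: nuv; rewrite ut vt.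
have [x /andP[eux nxv]] : exists x, e u x && (x != v).
  have [/existsP//|H] := boolP [exists x, e u x && (x != v)]; exfalso.
  have allv : forall y, e u y -> y = v.
    move=> y euy; apply/eqP; apply/negPn/negP => nyv.
    by apply: (negP H); apply/existsP; exists y; rewrite euy.
  have [y euy] : exists y, e u y.
    have [/existsP//|H2] := boolP [exists y, e u y]; exfalso.
    apply: nut; apply/(hout u).
    apply/eqP; rewrite cards_eq0; apply/eqP/setP => y.
    rewrite inE in_set0; apply/negP => euy; apply: (negP H2); apply/existsP; by exists y.
  have euv : e u v by rewrite -(allv y euy).
  clear euy y.
  apply: (comp u v euv); split.
    rewrite /outdeg (_ : [set y | e u y] = [set v]) ?cards1 //.
    apply/setP => y; rewrite !inE; apply/idP/eqP; first exact: allv.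
    by move->.
  rewrite /indeg (_ : [set y | e y v] = [set u]) ?cards1 //.
  apply/setP => y; rewrite !inE; apply/idP/eqP; last by move->.
  move=> eyv.
  have [p Wp] := hfrom y.
  have Wv : is_walk e s v (rcons p v).
    by move: Wp; rewrite /is_walk rcons_path last_rcons eqxx andbT => /andP[-> /eqP ->].
  have Hu := sd _ Wv.
  have Hu' : u \in s :: p.
    move: Hu; rewrite -rcons_cons mem_rcons in_cons => /orP[/eqP|] //.
  have [p1 [[|z p2] [_ [_ W2]]]] := walk_split Wp Hu'.
    by move: W2; rewrite /is_walk /= => /eqP.
  move: W2; rewrite /is_walk /= => /andP[/andP[euz P2] L].
  have zv := allv z euz; subst z.
  have : is_walk e v v (rcons p2 v).
    by rewrite /is_walk rcons_path P2 last_rcons eqxx andbT (eqP L) eyv.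
  by move/acy; case: p2 {P2 L}.
have ux : s_dom e s u x.
  move=> q Wq; apply/negPn/negP => Hn.
  have [r Wr] := hto x.
  have Wu : is_walk e u t (x :: r) by move: Wr; rewrite /is_walk /= eux.
  have Hv := td _ Wu.
  have Hv' : v \in x :: r by move: Hv; rewrite in_cons => /orP[/eqP E|]//; case: nuv.
  have [r1 [r2 [Er [W1 _]]]] := walk_split Wr Hv'.
  have := sd _ (walk_cat Wq W1).
  rewrite -cat_cons mem_cat (negbTE Hn) /=.
  move=> Hr1; have := noback _ _ _ eux Wr.
  by rewrite Er in_cons mem_cat Hr1 orbT.
exists x; split; first by move/eqP: nxv.
split.
- move=> xs; have := proj2 (hin x) xs; rewrite /indeg => /eqP.
  by rewrite cards_eq0 => /eqP/setP/(_ u); rewrite !inE eux.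
- move=> E; have := noback x [::] x eux; rewrite /is_walk /= eqxx in_cons in_nil orbF E eqxx.
  by move=> /(_ isT).
- exact: ux.
- move=> c ncx cd p Wp.
  have Wx : is_walk e s x (rcons p x).
    by move: Wp; rewrite /is_walk rcons_path last_rcons eqxx andbT => /andP[-> /eqP ->].
  have := cd _ Wx; rewrite -rcons_cons mem_rcons in_cons => /orP[/eqP E|] //.
Qed.

End Aux.

Theorem lemma4 (T : finType) (e : rel T) (s t u v : T) :
  st_dag e s t -> compressed e -> u <> v ->
  imm_s_dom e s u v -> imm_t_dom e t v u ->
  (exists w, w <> v /\ imm_s_dom e s u w) /\
  (exists w, w <> u /\ imm_t_dom e t v w).
Proof.
move=> D C nuv [_ _ sd _] [_ _ td _].
split; first exact: (side D C nuv sd td).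
set f := fun a b => e b a.
have revw : forall x y p, is_walk f x y p -> exists q, is_walk e y x q /\ (x :: p =i y :: q).
  move=> x y p W; have [W' M] := rev_walk (e := f) W.
  by exists (rev (belast x p)); split => // z; rewrite M.
have tdom_f : forall a b c, t_dom e a b c -> s_dom f a b c.
  move=> a b c H p W; have [q [Wq M]] := revw _ _ _ W.
  by rewrite M; apply: H.
have sdom_f : forall a b c, s_dom e a b c -> t_dom f a b c.
  move=> a b c H p W; have [q [Wq M]] := revw _ _ _ W.
  by rewrite M; apply: H.
have sdom_f' : forall a b c, s_dom f a b c -> t_dom e a b c.
  move=> a b c H p W; have [W' M] := rev_walk W.
  by rewrite -M; apply: H.
case: D => acy hin hout hfrom hto.
have D' : st_dag f t s.
  split => //.
  - move=> x p W; have [W' _] := rev_walk W.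
    have := acy _ _ W'; move/(congr1 size); rewrite size_rev size_belast /=.
    by case: p {W W'}.
  - move=> x; have [p Wp] := hto x; have [W' _] := rev_walk Wp; by eexists; exact: W'.
  - move=> x; have [p Wp] := hfrom x; have [W' _] := rev_walk Wp; by eexists; exact: W'.
have C' : compressed f by move=> x y fxy [h1 h2]; exact: (C y x fxy).
have [w [nwu [w1 w2 w3 w4]]] := side D' C' (nesym nuv) (tdom_f _ _ _ td) (sdom_f _ _ _ sd).
exists w; split => //; split => //; first exact: sdom_f'.
move=> c ncw cd; apply: sdom_f'; apply: w4 => //; exact: tdom_f.
Qed.
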